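(* Let $x$ be a real number. The number of primes $p$ for which $P^+(p^2-1)\le x$ is at most $3\cdot 7^{1+2\pi(x)}$.
   Context: $P^+(n)$ denotes the largest prime divisor of an integer $n\ge 2$ (with $P^+(1)=1$), and $\pi(x)$ is the number of primes not exceeding $x$. *)

(* Defs.v *)
From Stdlib Require Import Reals ZArith.
From mathcomp Require Import all_boot.

(* largest prime divisor P^+(n); max_pdiv 1 = 1 matching P^+(1) = 1 *)
Definition largest_pdiv (n : nat) : nat := max_pdiv n.

(* floor of a real: up x is the unique integer with x < up x <= x + 1 *)
Definition rfloor (x : R) : Z := (up x - 1)%Z.

Definition primepi (x : R) : nat :=
  count prime (iota 0 (Z.to_nat (rfloor x)).+1).

(* Main.v *)
Require Import Defs.
From Stdlib Require Import Reals.
From Stdlib Require Import ZArith Lia Classical.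
From mathcomp Require Import all_boot.
From mathcomp Require Import zify.

Open Scope Z_scope.
Lemma sq_le (a b : Z) : 0 <= b -> a*a <= b*b -> a <= b.
Proof. intros. nia. Qed.
Lemma sq_lt (a b : Z) : 0 <= b -> a*a < b*b -> a < b.
Proof. intros. nia. Qed.

Lemma descentZ (D X Y X1 Y1 : Z) : 0 < D -> 0 <= X -> 0 <= X1 -> 0 < Y1 -> Y1 <= Y ->
  X*X = 1 + D*(Y*Y) -> X1*X1 = 1 + D*(Y1*Y1) ->
  0 <= X*X1 - D*Y*Y1 /\ 0 <= X1*Y - X*Y1 /\ X1*Y - X*Y1 < Y /\
  (X*X1 - D*Y*Y1)*(X*X1 - D*Y*Y1) = 1 + D*((X1*Y - X*Y1)*(X1*Y - X*Y1)) /\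
  X = X1*(X*X1 - D*Y*Y1) + D*Y1*(X1*Y - X*Y1) /\
  Y = X1*(X1*Y - X*Y1) + Y1*(X*X1 - D*Y*Y1).
Proof.
  intros HD HX HX1 HY1 HYY E E1.
  assert (Hx1 : 1 <= X1) by nia.
  assert (A : D*Y*Y1 <= X*X1).
  { apply sq_le; [nia|]. 
    replace (X*X1*(X*X1)) with ((X*X)*(X1*X1)) by ring. rewrite E E1. nia. }
  assert (B : X*Y1 <= X1*Y).
  { apply sq_le; [nia|].
    replace (X1*Y*(X1*Y)) with ((X1*X1)*(Y*Y)) by ring.
    replace (X*Y1*(X*Y1)) with ((X*X)*(Y1*Y1)) by ring. rewrite E E1. nia. }
  assert (C : (X1 - 1)*Y < X*Y1).
  { apply sq_lt; [nia|].
    replace (X*Y1*(X*Y1)) with ((X*X)*(Y1*Y1)) by ring. rewrite E.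
    assert ((X1-1)*(X1-1) <= D*(Y1*Y1)) by nia. nia. }
  split; [lia|]. split; [lia|]. split; [nia|].
  split; [|split].
  - assert (I : (X*X1 - D*Y*Y1)*(X*X1 - D*Y*Y1) - D*((X1*Y - X*Y1)*(X1*Y - X*Y1)) = (X*X - D*(Y*Y))*(X1*X1 - D*(Y1*Y1))) by ring.
    rewrite E E1 in I. lia.
  - transitivity (X*(X1*X1 - D*(Y1*Y1))). rewrite E1. ring. ring.
  - transitivity (Y*(X1*X1 - D*(Y1*Y1))). rewrite E1. ring. ring.
Qed.

Lemma solZ (D a b c d : Z) : a*a = 1 + D*(b*b) -> c*c = 1 + D*(d*d) ->
  (a*c + D*b*d)*(a*c + D*b*d) = 1 + D*((a*d+b*c)*(a*d+b*c)).
Proof.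
  intros E E1.
  assert (I : (a*c + D*b*d)*(a*c + D*b*d) - D*((a*d+b*c)*(a*d+b*c)) = (a*a - D*(b*b))*(c*c - D*(d*d))) by ring.
  rewrite E E1 in I. lia.
Qed.
Close Scope Z_scope.

Lemma descent (D X Y X1 Y1 : nat) : 0 < D -> 0 < Y1 -> Y1 <= Y ->
  X*X = 1 + D*(Y*Y) -> X1*X1 = 1 + D*(Y1*Y1) ->
  exists X2 Y2, Y2 < Y /\ X2*X2 = 1 + D*(Y2*Y2) /\ X = X1*X2 + D*Y1*Y2 /\ Y = X1*Y2 + Y1*X2.
Proof.
  move=> HD HY1 HYY E E1.
  have := descentZ (Z.of_nat D) (Z.of_nat X) (Z.of_nat Y) (Z.of_nat X1) (Z.of_nat Y1).
  move=> H; case: H; try lia.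
  move=> H1 [H2 [H3 [H4 [H5 H6]]]].
  case: (Z_of_nat_complete _ H1) => a Ha.
  case: (Z_of_nat_complete _ H2) => b Hb.
  rewrite Ha Hb in H3 H4 H5 H6.
  exists a, b; lia.
Qed.

Definition mulP (D : nat) (e f : nat * nat) : nat * nat :=
  (e.1*f.1 + D*e.2*f.2, e.1*f.2 + e.2*f.1).
Definition powP D e k := ssrnat.iter k (mulP D e) (1,0).
Definition sol D (e : nat*nat) := e.1*e.1 = 1 + D*(e.2*e.2).

Lemma sol_mul D e f : sol D e -> sol D f -> sol D (mulP D e f).
Proof.
  case: e => a b; case: f => c d; rewrite /sol /mulP /= => E E1.
  have := solZ (Z.of_nat D) (Z.of_nat a) (Z.of_nat b) (Z.of_nat c) (Z.of_nat d).
  lia.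
Qed.

Lemma mulP1 D f : mulP D (1,0) f = f.
Proof. case: f => c d; rewrite /mulP /=; congr pair; lia. Qed.

Lemma mulPA D e f g : mulP D e (mulP D f g) = mulP D (mulP D e f) g.
Proof. case: e => a b; case: f => c d; case: g => u v; rewrite /mulP /=; congr pair; lia. Qed.

Lemma mulPC D e f : mulP D e f = mulP D f e.
Proof. case: e => a b; case: f => c d; rewrite /mulP /=; congr pair; lia. Qed.

Lemma powPS D e k : powP D e k.+1 = mulP D e (powP D e k).
Proof. by []. Qed.

Lemma powP_add D e m n : powP D e (m + n) = mulP D (powP D e m) (powP D e n).
Proof.
  elim: m => [|m IH]; first by rewrite add0n mulP1.
  by rewrite addSn !powPS IH mulPA.
Qed.

Lemma powP_mul D e m n : powP D e (m * n) = powP D (powP D e m) n.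
Proof.
  elim: n => [|n IH]; first by rewrite muln0.
  by rewrite mulnS powP_add IH powPS.
Qed.

Lemma powP_sol D e k : sol D e -> sol D (powP D e k).
Proof.
  move=> He; elim: k => [|k IH]; first by rewrite /sol /=; lia.
  by rewrite powPS; apply: sol_mul.
Qed.

Lemma powP_pos D e k : sol D e -> 0 < e.2 -> 0 < k -> 0 < (powP D e k).2.
Proof.
  move=> He Hp; case: k => // k _.
  have := @powP_sol D e k He; rewrite powPS /sol /mulP /=.
  case: (powP D e k) => a b /= Hs.
  have : 0 < a by nia.
  move: Hp; case: e He => c d /= _; nia.
Qed.

Lemma structure D eps : 0 < D -> sol D eps -> 0 < eps.2 ->
  (forall f, sol D f -> 0 < f.2 -> eps.2 <= f.2) ->
  forall f, sol D f -> exists n, f = powP D eps n.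
Proof.
  case: eps => X1 Y1 /=; move=> HD He Hp Hmin.
  suff H : forall N f, f.2 <= N -> sol D f -> exists n, f = powP D (X1,Y1) n.
    by move=> f; apply: (H f.2).
  elim=> [|N IH] [X Y] /= HN Hs.
    exists 0; rewrite /sol /= in Hs; rewrite /=; congr pair; nia.
  case: (posnP Y) => HY.
    exists 0; rewrite /sol /= in Hs; rewrite /=; congr pair; nia.
  have Hle := Hmin (X, Y) Hs HY.
  have [X2 [Y2 [H1 [H2 [H3 H4]]]]] := @descent D X Y X1 Y1 HD Hp Hle Hs He.
  have [m Hm] : exists m, (X2, Y2) = powP D (X1, Y1) m.
    apply: IH => //=; lia.
  exists m.+1; rewrite powPS -Hm /mulP /=; congr pair; lia.
Qed.

Lemma powP_form D U V k : exists a b,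
  powP D (U,V) k = (U^k + D*a, V*(k*U^k.-1 + D*b)).
Proof.
  elim: k => [|k [a [b IH]]]; first by exists 0, 0; rewrite /= muln0 addn0 muln0.
  exists (U*a + V*(V*(k*U^k.-1 + D*b))), (U*b + a).
  rewrite powPS IH /mulP /=; congr pair.
    rewrite expnS; lia.
  case: k {IH} => [|k] /=; first by lia.
  rewrite expnS; lia.
Qed.
Lemma no_power D U V q : 0 < D -> U*U = 1 + D*(V*V) -> 0 < V -> prime q ->
  (forall r, prime r -> r %| (powP D (U,V) q).2 -> r^2 %| D) -> False.
Proof.
  move=> HD E HV Hq H.
  have [a [b Hf]] := powP_form D U V q.
  rewrite Hf /= in H.
  set c := q*U^q.-1 + D*b in H.
  have HU2 : 2 <= U by nia.
  have Hcop : forall r, prime r -> r %| D -> ~~ (r %| U).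
    move=> r Hr HrD; apply/negP => HrU.
    have : r %| U * U by apply: dvdn_mulr.
    rewrite E addnC dvdn_addr; last by apply: dvdn_mulr.
    by rewrite dvdn1 => /eqP Hr1; move: (prime_gt1 Hr); rewrite Hr1.
  have HrD : forall r, prime r -> r %| c -> r %| D.
    move=> r Hr Hrc.
    have := H r Hr (dvdn_mull V Hrc).
    by apply: dvdn_trans; rewrite expnS dvdn_mulr.
  have HrQ : forall r, prime r -> r %| c -> r = q.
    move=> r Hr Hrc.
    have HD' := HrD r Hr Hrc.
    move: Hrc; rewrite /c dvdn_addl; last by apply: dvdn_mulr.
    rewrite Euclid_dvdM // Euclid_dvdX //.
    case/orP.
      by rewrite dvdn_prime2 // => /eqP.
    by case/andP => HrU; move: (Hcop r Hr HD'); rewrite HrU.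
  have Hq2 := prime_gt1 Hq.
  have HUq : 2 <= U^q.-1.
    case: q Hq2 {Hq H c HrD HrQ Hf} => [|[|k]] // _ /=.
    rewrite expnS; have : 0 < U^k by rewrite expn_gt0; apply/orP; left; lia.
    nia.
  have Hcq : q < c by rewrite /c; nia.
  have Hqc : q %| c.
    have Hp := pdiv_prime (ltn_trans Hq2 Hcq : 1 < c).
    by rewrite -(HrQ _ Hp (pdiv_dvd c)) pdiv_dvd.
  have HqD : q %| D by apply: HrD.
  have Hq2D : q^2 %| D by apply: H => //; apply: dvdn_mull.
  have Hc' : 1 < c %/ q.
    have := divnK Hqc; set c' := c %/ q => Hcc.
    case: (leqP c' 1) => // Hle.
    have : c <= q by rewrite -Hcc; nia.
    lia.
  have Hp' := pdiv_prime Hc'.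
  have Hqc' : q %| c %/ q.
    have Hpc : pdiv (c %/ q) %| c.
      by apply: dvdn_trans (pdiv_dvd _) _; rewrite -{2}(divnK Hqc) dvdn_mulr.
    by have := pdiv_dvd (c %/ q); rewrite (HrQ _ Hp' Hpc).
  have Hqqc : q^2 %| c.
    by rewrite -(divnK Hqc) expnS expn1 mulnC dvdn_pmul2l ?(ltnW Hq2).
  move: Hqqc; rewrite /c dvdn_addl; last by apply: dvdn_mulr.
  rewrite expnS expn1 dvdn_pmul2l ?(ltnW Hq2) // Euclid_dvdX // => /andP [HqU _].
  by move: (Hcop q Hq HqD); rewrite HqU.
Qed.
Lemma ex_min (P : nat -> Prop) : (exists n, P n) -> exists n, P n /\ forall m, P m -> n <= m.
Proof.
  move=> [n Hn].
  suff H : forall N n, n <= N -> P n -> exists n, P n /\ forall m, P m -> n <= m.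
    exact: (H n n (leqnn n) Hn).
  elim=> [|N IH] k Hk Pk.
    by exists k; split => // m _; lia.
  case: (classic (exists m, P m /\ m < k)) => [[m [Pm Hm]]|Hno].
    by apply: (IH m) => //; lia.
  exists k; split => // m Pm; case: (leqP k m) => // Hmk.
  by exfalso; apply: Hno; exists m.
Qed.

Definition goodY D Y := forall r, prime r -> r %| Y -> r^2 %| D.

Lemma pell_unique D X Y X' Y' : 0 < D -> X*X = 1 + D*(Y*Y) -> X'*X' = 1 + D*(Y'*Y') ->
  0 < Y -> 0 < Y' -> goodY D Y -> goodY D Y' -> X = X'.
Proof.
  move=> HD E E' HY HY' G G'.
  have [Y1 [[HY1 [X1 E1]] Hmin]] := ex_min (fun n => 0 < n /\ exists X, X*X = 1 + D*(n*n))
     (ex_intro _ Y (conj HY (ex_intro _ X E))).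
  have Hm : forall f, sol D f -> 0 < f.2 -> (X1,Y1).2 <= f.2.
    by move=> [a b] Hs Hb; apply: Hmin; split => //; exists a.
  have key : forall a b, a*a = 1 + D*(b*b) -> 0 < b -> goodY D b -> (a,b) = (X1,Y1).
    move=> a b Ea Hb Gb.
    have [n Hn] := @structure D (X1,Y1) HD E1 HY1 Hm (a,b) Ea.
    case: n Hn => [|[|n]] Hn.
    - by move: Hn => [_ Hb0]; move: Hb; rewrite Hb0.
    - by rewrite Hn /powP /= /mulP /=; congr pair; lia.
    exfalso.
    set N := n.+2 in Hn.
    have HN : 1 < N by [].
    have Hq := pdiv_prime HN.
    have Hqd := pdiv_dvd N.
    move: Hn; rewrite -(divnK Hqd) powP_mul.
    have Hpos : 0 < N %/ pdiv N by rewrite divn_gt0 ?pdiv_gt0 // dvdn_leq.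
    have Hs := @powP_sol D (X1,Y1) (N %/ pdiv N) E1.
    have Hp := @powP_pos D (X1,Y1) (N %/ pdiv N) E1 HY1 Hpos.
    case: (powP D (X1, Y1) (N %/ pdiv N)) Hs Hp => U V /= Hs Hp Hn.
    apply: (@no_power D U V (pdiv N) HD Hs Hp Hq).
    by rewrite -Hn.
  have := key X Y E HY G; have := key X' Y' E' HY' G'.
  by move=> [-> _] [-> _].
Qed.
Definition sig (e : nat) := if e./2 == 0 then (odd e : nat) else if odd e then 3 else 2.
Definition half (e : nat) := if e./2 == 0 then 0 else e./2 - 1.

Lemma sig_half e : sig e + 2 * half e = e.
Proof.
  have := odd_double_half e; rewrite /sig /half -muln2.
  case: (e./2 == 0) /eqP => H; case: (odd e) => /=; lia.
Qed.
Lemma sig0 : sig 0 = 0. Proof. by []. Qed.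
Lemma sig_lt4 e : sig e < 4.
Proof. by rewrite /sig; case: (e./2 == 0); case: (odd e). Qed.
Lemma half_sig e : 0 < half e -> 2 <= sig e.
Proof. by rewrite /sig /half; case: (e./2 == 0) => //; case: (odd e). Qed.

Lemma logn_prod (s : seq nat) (g : nat -> nat) r : uniq s -> all prime s -> prime r ->
  0 < \prod_(q <- s) q ^ g q /\
  logn r (\prod_(q <- s) q ^ g q) = if r \in s then g r else 0.
Proof.
  move=> Hu Ha Hr; elim: s Hu Ha => [|q s IH] /=.
    by rewrite big_nil logn1.
  move=> /andP [Hqs Hu] /andP [Hq Ha].
  have [Hpos Hl] := IH Hu Ha.
  have Hq0 : 0 < q ^ g q by rewrite expn_gt0 prime_gt0.
  rewrite big_cons; split; first by rewrite muln_gt0 Hq0.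
  rewrite lognM // Hl lognX logn_prime // in_cons.
  case: (eqVneq r q) => [Erq|Nrq] /=.
    by subst r; rewrite (negbTE Hqs) muln1 addn0.
  by rewrite muln0.
Qed.

Lemma logn_nprime p n : ~~ prime p -> logn p n = 0.
Proof. by move=> Hp; rewrite lognE (negbTE Hp). Qed.

Lemma factor n : 0 < n -> exists D Y, n = D * Y^2 /\
  (forall r, prime r -> logn r D = sig (logn r n)) /\ goodY D Y.
Proof.
  move=> Hn.
  set D := \prod_(q <- primes n) q ^ sig (logn q n).
  set Y := \prod_(q <- primes n) q ^ half (logn q n).
  have Hu := primes_uniq n.
  have Ha : all prime (primes n) by apply/allP => q; rewrite mem_primes => /andP [].
  have HD : forall r, prime r -> 0 < D /\ logn r D = if r \in primes n then sig (logn r n) else 0.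
    by move=> r Hr; apply: logn_prod.
  have HY : forall r, prime r -> 0 < Y /\ logn r Y = if r \in primes n then half (logn r n) else 0.
    by move=> r Hr; apply: logn_prod.
  have [D0 _] := HD 2 isT.
  have [Y0 _] := HY 2 isT.
  have Hnot : forall r, r \notin primes n -> logn r n = 0.
    by move=> r Hr; apply/eqP; rewrite -leqn0 leqNgt logn_gt0.
  exists D, Y; split; [|split].
  - apply: eqn_from_log => // [|r]; first by rewrite muln_gt0 D0 expn_gt0 Y0.
    case: (boolP (prime r)) => Hr; last by rewrite !logn_nprime.
    rewrite lognM ?expn_gt0 ?Y0 // lognX.
    have [_ ->] := HD r Hr; have [_ ->] := HY r Hr.
    case: (boolP (r \in primes n)) => Hrn.
      have := sig_half (logn r n); lia.
    by rewrite Hnot.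
  - move=> r Hr; have [_ ->] := HD r Hr.
    case: (boolP (r \in primes n)) => Hrn //.
    by rewrite Hnot.
  - move=> r Hr HrY.
    have [_ HlD] := HD r Hr; have [_ HlY] := HY r Hr.
    have : 0 < logn r Y by rewrite logn_gt0 mem_primes Hr Y0 HrY.
    rewrite HlY pfactor_dvdn // HlD.
    by case: (r \in primes n) => //; apply: half_sig.
Qed.

Lemma real_bound (x : R) (m : nat) : Rle (INR m) x -> m <= Z.to_nat (rfloor x).
Proof.
  move=> H; have [H1 _] := archimed x.
  rewrite INR_IZR_INZ in H.
  have : (Z.of_nat m < up x)%Z by apply: lt_IZR; apply: Rle_lt_trans H H1.
  rewrite /rfloor; lia.
Qed.

Theorem proposition8p7 (x : R) (s : seq nat) :
  uniq s ->
  (forall p, p \in s -> prime p /\ Rle (INR (largest_pdiv (p ^ 2 - 1))) x) ->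
  size s <= 3 * 7 ^ (1 + 2 * primepi x).
Proof.
  move=> Hu Hs.
  set Nx := Z.to_nat (rfloor x).
  set Pr := [seq q <- iota 0 Nx.+1 | prime q].
  have Hk : primepi x = size Pr by rewrite /primepi size_filter.
  set k := size Pr in Hk.
  have Hn : forall p, p \in s -> 0 < p ^ 2 - 1.
    move=> p /Hs [Hp _]; have := prime_gt1 Hp; rewrite subn_gt0 (expnS p 1) expn1; nia.
  have Hbnd : forall p q, p \in s -> prime q -> q %| p ^ 2 - 1 -> q \in Pr.
    move=> p q Hps Hq Hqd; have [_ Hx] := Hs p Hps.
    have Hq' : q <= max_pdiv (p ^ 2 - 1).
      by apply: max_pdiv_max; rewrite mem_primes Hq Hn.
    have := @real_bound x q (Rle_trans _ _ _ (le_INR _ _ (elimT leP Hq')) Hx).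
    by rewrite mem_filter Hq mem_iota /= add0n ltnS.
  pose sigf := fun p : nat =>
    [ffun i : 'I_k => (inord (sig (logn (nth 0 Pr i) (p ^ 2 - 1))) : 'I_4)].
  have Hinj : {in s &, injective sigf}.
    move=> p p' Hp Hp' Heq.
    have [D [Y [E [HD G]]]] := @factor _ (Hn p Hp).
    have [D' [Y' [E' [HD' G']]]] := @factor _ (Hn p' Hp').
    have Hpos : forall a b c, 0 < c -> c = a * b ^ 2 -> 0 < a /\ 0 < b.
      move=> a b c Hc Ec; move: Hc; rewrite Ec muln_gt0 expn_gt0 orbF.
      by case/andP.
    have [D0 Y0] := Hpos _ _ _ (Hn p Hp) E.
    have [D0' Y0'] := Hpos _ _ _ (Hn p' Hp') E'.
    have Hnot : forall r m, 0 < m -> ~~ (r %| m) -> logn r m = 0.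
      move=> r m Hm Hr; apply/eqP; rewrite -leqn0 leqNgt logn_gt0 mem_primes.
      by rewrite (negbTE Hr) !andbF.
    have ED : D = D'.
      apply: eqn_from_log => // r.
      case: (boolP (prime r)) => Hr; last by rewrite !logn_nprime.
      rewrite HD // HD' //.
      case: (boolP (r \in Pr)) => HrP.
        have Hi : index r Pr < k by rewrite index_mem.
        have := congr1 (fun f : {ffun 'I_k -> 'I_4} => nat_of_ord (f (Ordinal Hi))) Heq.
        rewrite /sigf !ffunE /= (nth_index 0 HrP) !inordK ?sig_lt4 //.
      rewrite !Hnot ?Hn //.
        by apply/negP => H; move: HrP; rewrite (Hbnd p' r Hp' Hr H).
      by apply/negP => H; move: HrP; rewrite (Hbnd p r Hp Hr H).
    subst D'.
    have Hp1 : 0 < p by have [Hq _] := Hs p Hp; apply: prime_gt0.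
    have Hp1' : 0 < p' by have [Hq _] := Hs p' Hp'; apply: prime_gt0.
    apply: (@pell_unique D p Y p' Y' D0 _ _ Y0 Y0' G G').
      by rewrite !mulnn -E subnKC // expn_gt0 Hp1.
    by rewrite !mulnn -E' subnKC // expn_gt0 Hp1'.
  have Hsz : size s <= 4 ^ k.
    have Hu' : uniq (map sigf s) by rewrite map_inj_in_uniq.
    rewrite -(size_map sigf) -(card_uniqP Hu').
    by apply: leq_trans (max_card _) _; rewrite card_ffun !card_ord.
  rewrite Hk; apply: (leq_trans Hsz).
  have H47 : 4 ^ k <= 7 ^ k.
    elim: (k) => // j IH; rewrite !expnS; lia.
  apply: (leq_trans H47); apply: leq_trans (leq_pexp2l _ (_ : k <= 1 + 2 * k)) _ => //.
    lia.
  by rewrite leq_pmull.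
Qed.
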